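(* Let $E$ and $E^c=\partial\overline{\mathcal{G}}\setminus E$ be nonempty clopen subsets of $\partial\overline{\mathcal{G}}$. Let $f:\overline{\mathcal{G}}\to\mathbb{R}$ be harmonic with $f=C\ge 0$ on $E$ and $f>C$ on $E^c$. Let $\epsilon>0$, and let $t_1,t_2$ be regular values of $f$ with: - $C<t_2<t_1<\min_{x\in E^c}f(x)$; - $d(x,E)<\epsilon$ whenever $f(x)\le t_i$, for $i=1,2$. Let $\mathcal{G}_2=f^{-1}([t_2,t_1])\cap\mathcal{G}$, regarded as a graph after subdividing edges at the (finitely many, interior to edges) points of $f^{-1}(t_1)\cup f^{-1}(t_2)$. Then $\mathcal{G}_2$ is a finite graph containing no boundary vertices of $\mathcal{G}$, and $$\sum_{v\in f^{-1}(t_1)}\partial_\nu f(v)=\sum_{v\in f^{-1}(t_2)}\partial_\nu f(v),$$ where for $v\in f^{-1}(t_i)$ the quantity $\partial_\nu f(v)$ is the derivative of $f$ at $v$ along the edge of $\mathcal{G}_{t_i}=\{f\ge t_i\}$ incident on $v$, in the direction pointing from $v$ into that edge (i.e. $v$ is regarded as a boundary vertex of $\mathcal{G}_{t_i}$).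
   Context: $\mathcal{G}$ is a connected, locally finite metric graph with countable vertex set and countable edge set. Each edge has a positive length and is identified with an interval. $\mathcal{G}$ carries the geodesic distance $d$, and $\overline{\mathcal{G}}$ is its metric completion. A designated set of vertices, containing all vertices of degree $1$, forms the boundary vertices. $\mathcal{G}_{int}$ is $\mathcal{G}$ minus the boundary vertices, and $\partial\overline{\mathcal{G}}=\overline{\mathcal{G}}\setminus\mathcal{G}_{int}$. Standing assumptions: $\overline{\mathcal{G}}$ is compact and $\partial\overline{\mathcal{G}}$ is totally disconnected. Clopen means open and closed in $\partial\overline{\mathcal{G}}$. A function $f:\overline{\mathcal{G}}\to\mathbb{R}$ is harmonic if it is continuous, linear on each edge, and satisfies $\sum_{e\sim v}\partial_\nu f_e(v)=0$ at every interior vertex $v$, where $\partial_\nu f_e(v)$ is the derivative of $f_e$ at $v$ in the direction from $v$ into the edge $e$. A point $x\in\mathcal{G}$ is a critical point of $f$ if $x$ is a vertex or $f'(x)=0$. A number is a critical value if its preimage contains a critical point. Values in the range of $f$ that are not critical values are regular values. *)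

(* Defs.v *)
From Stdlib Require Import Reals List ClassicalEpsilon.
Open Scope R_scope.

Record MGraph := MkMGraph {
  V : Type;
  Ed : Type;
  src : Ed -> V;            (* edge e is identified with [0, len e], 0 ~ src e *)
  tgt : Ed -> V;            (*                                   len e ~ tgt e *)
  len : Ed -> R;
  bdry : V -> Prop
}.

Arguments src {m}. Arguments tgt {m}. Arguments len {m}. Arguments bdry {m}.

Definition incident {G : MGraph} (e : Ed G) (v : V G) : Prop :=
  src e = v \/ tgt e = v.

Definition deg_one {G : MGraph} (v : V G) : Prop :=
  exists e, incident e v /\ src e <> tgt e /\
    forall e', incident e' v -> e' = e.

Inductive walk {G : MGraph} : V G -> V G -> list (Ed G) -> Prop :=
| walk_nil : forall u, walk u u nil
| walk_cons : forall u w z e l,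
    ((src e = u /\ tgt e = w) \/ (src e = w /\ tgt e = u)) ->
    walk w z l -> walk u z (e :: l).

Definition walk_len {G : MGraph} (l : list (Ed G)) : R :=
  fold_right (fun e acc => len e + acc) 0 l.

Definition countable (T : Type) : Prop :=
  exists c : T -> nat, forall x y, c x = c y -> x = y.

Definition wf_graph (G : MGraph) : Prop :=
  countable (V G) /\ countable (Ed G) /\
  (forall e : Ed G, 0 < len e) /\
  (forall v : V G, exists l : list (Ed G), forall e, incident e v -> In e l) /\
  (forall u w : V G, exists l, walk u w l) /\
  (forall v : V G, deg_one v -> bdry v).

(* GV v = vertex v ; GE e s = interior point of edge e at distance s from src e *)
Inductive gpt (G : MGraph) : Type :=
| GV : V G -> gpt G
| GE : Ed G -> R -> gpt G.
Arguments GV {G}. Arguments GE {G}.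

Definition valid {G : MGraph} (p : gpt G) : Prop :=
  match p with GV _ => True | GE e s => 0 < s < len e end.

(* points of G_int = G minus the boundary vertices *)
Definition interior_pt {G : MGraph} (p : gpt G) : Prop :=
  match p with GV v => ~ bdry v | GE _ _ => True end.

(* ways to leave a point towards a vertex, with the length travelled *)
Definition anchors {G : MGraph} (p : gpt G) : list (V G * R) :=
  match p with
  | GV v => (v, 0) :: nil
  | GE e s => (src e, s) :: (tgt e, len e - s) :: nil
  end.

Definition path_lengths {G : MGraph} (p q : gpt G) (r : R) : Prop :=
  (exists u a w b l, In (u, a) (anchors p) /\ In (w, b) (anchors q) /\
      walk u w l /\ r = a + walk_len l + b) \/
  (exists e s s', p = GE e s /\ q = GE e s' /\ r = Rabs (s - s')).

Definition is_glb (S : R -> Prop) (m : R) : Prop :=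
  (forall x, S x -> m <= x) /\ (forall m', (forall x, S x -> m' <= x) -> m' <= m).

Definition geod_dist {G : MGraph} (p q : gpt G) (r : R) : Prop :=
  is_glb (path_lengths p q) r.

Definition is_metric {X : Type} (d : X -> X -> R) : Prop :=
  (forall x y, d x y = 0 <-> x = y) /\ (forall x y, d x y = d y x) /\
  (forall x y z, d x z <= d x y + d y z).

Definition cauchy {X : Type} (d : X -> X -> R) (u : nat -> X) : Prop :=
  forall eps, 0 < eps -> exists N, forall n m, (N <= n)%nat -> (N <= m)%nat ->
    d (u n) (u m) < eps.

Definition converges {X : Type} (d : X -> X -> R) (u : nat -> X) (x : X) : Prop :=
  forall eps, 0 < eps -> exists N, forall n, (N <= n)%nat -> d (u n) x < eps.

(* (X, d) together with iota : G -> X is THE metric completion of (G, geodesic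
   distance) (unique up to isometry): iota is an isometric embedding with dense
   image and X is complete. *)
Definition is_completion {G : MGraph} {X : Type} (d : X -> X -> R)
  (iota : gpt G -> X) : Prop :=
  is_metric d /\
  (forall p q, valid p -> valid q -> geod_dist p q (d (iota p) (iota q))) /\
  (forall x eps, 0 < eps -> exists p, valid p /\ d x (iota p) < eps) /\
  (forall u, cauchy d u -> exists x, converges d u x).

(* compactness (sequential, equivalent to compactness for metric spaces) *)
Definition compact_space {X : Type} (d : X -> X -> R) : Prop :=
  forall u : nat -> X, exists (phi : nat -> nat) (x : X),
    (forall n, (phi n < phi (S n))%nat) /\ converges d (fun n => u (phi n)) x.

(* boundary  dG = Gbar \ G_int *)
Definition in_bd {G : MGraph} {X : Type} (iota : gpt G -> X) (x : X) : Prop :=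
  ~ (exists p, valid p /\ interior_pt p /\ x = iota p).

Definition metric_open {X : Type} (d : X -> X -> R) (U : X -> Prop) : Prop :=
  forall x, U x -> exists r, 0 < r /\ forall y, d x y < r -> U y.

Definition connected_set {X : Type} (d : X -> X -> R) (S : X -> Prop) : Prop :=
  forall U W, metric_open d U -> metric_open d W ->
    (forall x, S x -> U x \/ W x) -> (forall x, ~ (S x /\ U x /\ W x)) ->
    (forall x, S x -> U x) \/ (forall x, S x -> W x).

Definition totally_disconnected {X : Type} (d : X -> X -> R) (B : X -> Prop) : Prop :=
  forall S, (forall x, S x -> B x) -> connected_set d S ->
    forall x y, S x -> S y -> x = y.

Definition rel_open {X : Type} (d : X -> X -> R) (B A : X -> Prop) : Prop :=
  forall x, A x -> exists r, 0 < r /\ forall y, B y -> d x y < r -> A y.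

Definition clopen_in {X : Type} (d : X -> X -> R) (B A : X -> Prop) : Prop :=
  (forall x, A x -> B x) /\ rel_open d B A /\ rel_open d B (fun x => B x /\ ~ A x).

Definition continuous_on_space {X : Type} (d : X -> X -> R) (f : X -> R) : Prop :=
  forall x eps, 0 < eps -> exists delta, 0 < delta /\
    forall y, d x y < delta -> Rabs (f y - f x) < eps.

Definition slope {G : MGraph} {X : Type} (iota : gpt G -> X) (f : X -> R)
  (e : Ed G) : R :=
  (f (iota (GV (tgt e))) - f (iota (GV (src e)))) / len e.

Definition linear_on_edges {G : MGraph} {X : Type} (iota : gpt G -> X)
  (f : X -> R) : Prop :=
  forall e s, 0 < s < len e ->
    f (iota (GE e s)) = f (iota (GV (src e))) + slope iota f e * s.

Definition decP (P : Prop) : bool :=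
  if excluded_middle_informative P then true else false.

(* sum over the ends of e at v of the derivative of f_e at v pointing into e *)
Definition out_deriv {G : MGraph} {X : Type} (iota : gpt G -> X) (f : X -> R)
  (v : V G) (e : Ed G) : R :=
  (if decP (src e = v) then slope iota f e else 0) +
  (if decP (tgt e = v) then - slope iota f e else 0).

Definition sumR {A : Type} (g : A -> R) (l : list A) : R :=
  fold_right (fun a acc => g a + acc) 0 l.

Definition harmonic {G : MGraph} {X : Type} (d : X -> X -> R)
  (iota : gpt G -> X) (f : X -> R) : Prop :=
  continuous_on_space d f /\ linear_on_edges iota f /\
  forall v : V G, ~ bdry v ->
    forall l : list (Ed G), NoDup l -> (forall e, In e l <-> incident e v) ->
      sumR (out_deriv iota f v) l = 0.

Definition critical_pt {G : MGraph} {X : Type} (iota : gpt G -> X) (f : X -> R)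
  (p : gpt G) : Prop :=
  match p with GV _ => True | GE e _ => slope iota f e = 0 end.

Definition regular_value {G : MGraph} {X : Type} (iota : gpt G -> X)
  (f : X -> R) (t : R) : Prop :=
  (exists x, f x = t) /\
  (forall p, valid p -> critical_pt iota f p -> f (iota p) <> t).

(* derivative of f at p (a point of f^{-1}(t) interior to an edge), along the
   edge of G_t = {f >= t} incident on p, pointing from p into that edge *)
Definition nu_deriv {G : MGraph} {X : Type} (iota : gpt G -> X) (f : X -> R)
  (t : R) (p : gpt G) : R :=
  match p with
  | GV _ => 0
  | GE e s =>
      if decP (exists h, 0 < h /\ forall h', 0 < h' < h -> t <= f (iota (GE e (s + h'))))
      then slope iota f e else - slope iota f e
  end.

Definition enumerates_level {G : MGraph} {X : Type} (iota : gpt G -> X)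
  (f : X -> R) (t : R) (L : list (gpt G)) : Prop :=
  NoDup L /\ forall p, In p L <-> (valid p /\ f (iota p) = t).

(* Main.v *)
Require Import Defs.
From Stdlib Require Import Reals List.
From Stdlib Require Import Lra Lia Permutation ClassicalEpsilon Classical FinFun.
Open Scope R_scope.

Lemma decP_T (P : Prop) : P -> decP P = true.
Proof. unfold decP; destruct (excluded_middle_informative P); tauto. Qed.
Lemma decP_F (P : Prop) : ~ P -> decP P = false.
Proof. unfold decP; destruct (excluded_middle_informative P); tauto. Qed.
Lemma decP_iff (P Q : Prop) : (P <-> Q) -> decP P = decP Q.
Proof. intro H. destruct (classic P). rewrite !decP_T; tauto. rewrite !decP_F; tauto. Qed.

Lemma sumR_ext {A} (g h : A -> R) l : (forall x, In x l -> g x = h x) -> sumR g l = sumR h l.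
Proof. induction l; simpl; intros H; auto. rewrite H, IHl; auto. Qed.
Lemma sumR_plus {A} (g h : A -> R) l : sumR (fun x => g x + h x) l = sumR g l + sumR h l.
Proof. induction l; simpl; lra. Qed.
Lemma sumR_opp {A} (g : A -> R) l : sumR (fun x => - g x) l = - sumR g l.
Proof. induction l; simpl; lra. Qed.
Lemma sumR_zero {A} (g : A -> R) l : (forall x, In x l -> g x = 0) -> sumR g l = 0.
Proof. induction l; simpl; intros H; auto. rewrite H, IHl; auto; lra. Qed.
Lemma sumR_map {A B} (g : B -> R) (h : A -> B) l : sumR g (map h l) = sumR (fun x => g (h x)) l.
Proof. induction l; simpl; auto. rewrite IHl; auto. Qed.
Lemma sumR_filter {A} (g : A -> R) b l :
  sumR g (filter b l) = sumR (fun x => if b x then g x else 0) l.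
Proof. induction l; simpl; auto. destruct (b a); simpl; rewrite IHl; lra. Qed.
Lemma sumR_perm {A} (g : A -> R) l l' : Permutation l l' -> sumR g l = sumR g l'.
Proof. induction 1; simpl; lra. Qed.
Lemma sumR_swap {A B} (h : A -> B -> R) la lb :
  sumR (fun a => sumR (h a) lb) la = sumR (fun b => sumR (fun a => h a b) la) lb.
Proof.
  induction la; simpl. symmetry; apply sumR_zero; auto.
  rewrite IHla. rewrite <- sumR_plus. reflexivity.
Qed.
Lemma sumR_ind {A} (a : A) (c : R) l : NoDup l ->
  sumR (fun v => if decP (a = v) then c else 0) l = if decP (In a l) then c else 0.
Proof.
  induction l; simpl; intros Hn. rewrite decP_F; auto.
  inversion Hn; subst. rewrite IHl; auto.
  destruct (classic (a = a0)).
  - subst. rewrite (decP_T (a0 = a0)), (decP_F (In a0 l)), decP_T; auto. lra.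
  - rewrite (decP_F (a = a0)) by auto. destruct (classic (In a l)).
    + rewrite !decP_T; auto. lra.
    + rewrite !decP_F; auto; try lra. intros [?|?]; auto.
Qed.

Lemma sumR_subset {A} (g : A -> R) l1 l2 : NoDup l1 -> NoDup l2 ->
  (forall x, In x l1 -> In x l2) -> (forall x, In x l2 -> ~ In x l1 -> g x = 0) ->
  sumR g l1 = sumR g l2.
Proof.
  intros N1 N2 Hi Hz.
  transitivity (sumR g (filter (fun x => decP (In x l1)) l2)).
  - apply sumR_perm, NoDup_Permutation; auto. apply NoDup_filter; auto.
    intro x; rewrite filter_In; split.
    + intro H; split; auto; apply decP_T; auto.
    + intros [_ H]. destruct (classic (In x l1)); auto. rewrite decP_F in H; auto; discriminate.
  - rewrite sumR_filter. apply sumR_ext. intros x Hx.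
    destruct (classic (In x l1)). rewrite decP_T; auto. rewrite decP_F; auto. symmetry; auto.
Qed.

Lemma exact_list {T} (l : list T) (P : T -> Prop) : (forall x, P x -> In x l) ->
  exists L, NoDup L /\ forall x, In x L <-> P x.
Proof.
  revert P; induction l as [|a l IH]; intros P H.
  - exists nil; split. constructor. intro x; split; simpl; try tauto. intro Hp; apply (H x Hp).
  - destruct (IH (fun x => P x /\ x <> a)) as [L [N HL]].
    { intros x [Hp Hne]. destruct (H x Hp); auto. congruence. }
    destruct (classic (P a)).
    + exists (a :: L); split.
      * constructor; auto. rewrite HL; tauto.
      * intro x; simpl; rewrite HL. split. intros [<-|[? ?]]; auto.
        intro Hp; destruct (classic (a = x)); auto.
    + exists L; split; auto. intro x; rewrite HL; split; [tauto|].
      intro Hp; split; auto; intro; subst; auto.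
Qed.

Lemma phi_mono (phi : nat -> nat) : (forall n, (phi n < phi (S n))%nat) ->
  forall m n, (m < n)%nat -> (phi m < phi n)%nat.
Proof. intros H m n Hmn. induction Hmn. apply H. specialize (H m0); lia. Qed.

Lemma finite_by_compact {X K A : Type} (d : X -> X -> R) (f : X -> R) (pt : A -> X)
  (key : A -> K) (P : A -> Prop) (t2 t1 : R) :
  is_metric d -> compact_space d -> continuous_on_space d f ->
  (forall a, P a -> t2 <= f (pt a) <= t1) ->
  (forall x, t2 <= f x <= t1 -> exists r, 0 < r /\ exists L,
      forall a, P a -> d x (pt a) < r -> In (key a) L) ->
  exists l, forall a, P a -> In (key a) l.
Proof.
  intros [_ [Hsym _]] Hcomp Hcont HP Hloc.
  apply NNPP; intro Hno.
  assert (Hnext : forall l, exists a, P a /\ ~ In (key a) l).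
  { intro l. apply NNPP; intro H. apply Hno. exists l. intros a Ha.
    apply NNPP; intro H'. apply H. exists a; auto. }
  set (next := fun l => proj1_sig (constructive_indefinite_description _ (Hnext l))).
  assert (Hn : forall l, P (next l) /\ ~ In (key (next l)) l).
  { intro l. unfold next. destruct (constructive_indefinite_description _ (Hnext l)); auto. }
  set (ls := fix ls n := match n with O => nil | S n => key (next (ls n)) :: ls n end).
  set (u := fun n => next (ls n)).
  assert (Hin : forall m n, (m < n)%nat -> In (key (u m)) (ls n)).
  { intros m n Hmn. induction Hmn; simpl; auto. }
  assert (Hdist : forall m n, m <> n -> key (u m) <> key (u n)).
  { intros m n Hmn Heq. destruct (Nat.lt_gt_cases m n) as [[H|H] _]; auto.
    - apply (proj2 (Hn (ls n))). fold (u n). rewrite <- Heq; auto.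
    - apply (proj2 (Hn (ls m))). fold (u m). rewrite Heq; auto. }
  destruct (Hcomp (fun n => pt (u n))) as [phi [x [Hphi Hcv]]].
  assert (Hfx : t2 <= f x <= t1).
  { split; apply Rnot_lt_le; intro Hlt.
    - destruct (Hcont x (t2 - f x)) as [del [Hdel Hd]]; [lra|].
      destruct (Hcv del Hdel) as [N HN]. specialize (HN N (le_n _)).
      rewrite Hsym in HN. specialize (Hd _ HN).
      destruct (HP (u (phi N))) as [H1 _]. apply Hn. apply Rabs_def2 in Hd. lra.
    - destruct (Hcont x (f x - t1)) as [del [Hdel Hd]]; [lra|].
      destruct (Hcv del Hdel) as [N HN]. specialize (HN N (le_n _)).
      rewrite Hsym in HN. specialize (Hd _ HN).
      destruct (HP (u (phi N))) as [_ H1]. apply Hn. apply Rabs_def2 in Hd. lra. }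
  destruct (Hloc x Hfx) as [r [Hr [L HL]]].
  destruct (Hcv r Hr) as [N HN].
  set (g := fun i => key (u (phi (N + i)%nat))).
  assert (Hnd : NoDup (map g (seq 0 (S (length L))))).
  { apply Injective_map_NoDup_in; [|apply seq_NoDup].
    intros i j _ _ Hij. unfold g in Hij. apply NNPP; intro Hne.
    apply (Hdist (phi (N+i)%nat) (phi (N+j)%nat)); auto.
    destruct (Nat.lt_gt_cases i j) as [[H|H] _]; auto.
    - pose proof (phi_mono phi Hphi (N+i) (N+j)); lia.
    - pose proof (phi_mono phi Hphi (N+j) (N+i)); lia. }
  apply NoDup_incl_length with (l' := L) in Hnd.
  - rewrite length_map, length_seq in Hnd. lia.
  - intros k Hk. apply in_map_iff in Hk. destruct Hk as [i [<- _]].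
    unfold g. apply HL. apply Hn. rewrite Hsym. apply HN. lia.
Qed.

Lemma walk_len_nonneg (G : MGraph) (Hlen : forall e : Ed G, 0 < len e) (l : list (Ed G)) :
  0 <= @walk_len G l.
Proof. induction l; simpl. lra. specialize (Hlen a); lra. Qed.

Lemma walk_start (G : MGraph) (Hlen : forall e : Ed G, 0 < len e) (u z : V G) (l : list (Ed G)) dl :
  walk u z l -> u <> z -> (forall e, incident e u -> dl <= len e) -> dl <= walk_len l.
Proof.
  intros Hw Hne Hd. inversion Hw; subst. congruence.
  simpl. pose proof (walk_len_nonneg G Hlen l0).
  assert (incident e u) by (unfold incident; destruct H as [[? ?]|[? ?]]; auto).
  specialize (Hd e H2). lra.
Qed.

Lemma delta_list (G : MGraph) (Hlen : forall e : Ed G, 0 < len e) (l : list (Ed G)) :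
  exists dl, 0 < dl /\ forall e, In e l -> dl <= len e.
Proof.
  induction l as [|a l [dl [Hd H]]].
  - exists 1; split; [lra|]; simpl; tauto.
  - exists (Rmin dl (len a)); split. apply Rmin_glb_lt; auto.
    intros e [<-|He]. apply Rmin_r. eapply Rle_trans. apply Rmin_l. auto.
Qed.

Lemma anchors_nonneg (G : MGraph) (q : gpt G) w b :
  valid q -> In (w, b) (anchors q) -> 0 <= b.
Proof.
  destruct q; simpl; intros Hv H.
  - destruct H as [H|[]]; inversion H; lra.
  - destruct H as [H|[H|[]]]; inversion H; lra.
Qed.

Lemma pl_lb_GE (G : MGraph) (Hlen : forall e : Ed G, 0 < len e) e' s' (q : gpt G) r :
  0 < s' < len e' -> valid q -> (forall e s, q = GE e s -> e <> e') ->
  path_lengths (GE e' s') q r -> Rmin s' (len e' - s') <= r.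
Proof.
  intros Hs Hv Hq [[u [a [w [b [l [Ha [Hb [Hw ->]]]]]]]] | [e [s [s2 [H1 [H2 _]]]]]].
  - pose proof (anchors_nonneg G q w b Hv Hb). pose proof (walk_len_nonneg G Hlen l).
    simpl in Ha. destruct Ha as [Ha|[Ha|[]]]; injection Ha; intros; subst u a.
    + pose proof (Rmin_l s' (len e' - s')); lra.
    + pose proof (Rmin_r s' (len e' - s')); lra.
  - inversion H1; subst. exfalso; apply (Hq e s2); auto.
Qed.

Lemma pl_lb_GV (G : MGraph) (Hlen : forall e : Ed G, 0 < len e) w dl (q : gpt G) r :
  (forall e, incident e w -> dl <= len e) -> valid q ->
  (forall w' b, In (w', b) (anchors q) -> w' <> w) ->
  path_lengths (GV w) q r -> dl <= r.
Proof.
  intros Hd Hv Hq [[u [a [w2 [b [l [Ha [Hb [Hw ->]]]]]]]] | [e [s [s2 [H1 _]]]]].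
  - pose proof (anchors_nonneg G q w2 b Hv Hb).
    simpl in Ha. destruct Ha as [Ha|[]]; inversion Ha; subst.
    pose proof (walk_start G Hlen u w2 l dl Hw (fun E => Hq _ _ Hb (eq_sym E)) Hd). lra.
  - discriminate.
Qed.

Lemma glb_lb (S : R -> Prop) m c : is_glb S m -> (forall r, S r -> c <= r) -> c <= m.
Proof. intros [_ H] Hc; apply H; auto. Qed.

Lemma loc_vertex (G : MGraph) (X : Type) (d : X -> X -> R) (iota : gpt G -> X) :
  wf_graph G -> is_completion d iota ->
  forall p, valid p -> exists r, 0 < r /\ exists L,
    forall u, d (iota p) (iota (GV u)) < r -> In u L.
Proof.
  intros [_ [_ [Hlen [Hlf _]]]] [_ [Hgd _]] p Hp.
  destruct p as [w | e' s'].
  - destruct (Hlf w) as [lw Hlw]. destruct (delta_list G Hlen lw) as [dl [Hdl Hd]].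
    exists dl; split; auto. exists (w :: nil). intros u Hu.
    destruct (classic (w = u)) as [E|E]; [left; auto|exfalso].
    assert (dl <= d (iota (GV w)) (iota (GV u))); [|lra].
    apply (glb_lb _ _ _ (Hgd (GV w) (GV u) I I)). intros r Hr.
    apply (pl_lb_GV G Hlen w dl (GV u) r); auto.
    simpl. intros w' b [H|[]]; inversion H; subst; auto.
  - exists (Rmin s' (len e' - s')); split. simpl in Hp. apply Rmin_glb_lt; lra.
    exists nil. intros u Hu. exfalso.
    assert (Rmin s' (len e' - s') <= d (iota (GE e' s')) (iota (GV u))); [|lra].
    apply (glb_lb _ _ _ (Hgd (GE e' s') (GV u) Hp I)). intros r Hr.
    apply (pl_lb_GE G Hlen e' s' (GV u) r); auto. all: try (intros; discriminate). exact I.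
Qed.

Lemma loc_edge (G : MGraph) (X : Type) (d : X -> X -> R) (iota : gpt G -> X) :
  wf_graph G -> is_completion d iota ->
  forall p, valid p -> exists r, 0 < r /\ exists L,
    forall e s, 0 < s < len e -> d (iota p) (iota (GE e s)) < r -> In e L.
Proof.
  intros [_ [_ [Hlen [Hlf _]]]] [_ [Hgd _]] p Hp.
  destruct p as [w | e' s'].
  - destruct (Hlf w) as [lw Hlw]. destruct (delta_list G Hlen lw) as [dl [Hdl Hd]].
    exists dl; split; auto. exists lw. intros e s Hs Hu.
    destruct (classic (incident e w)) as [E|E]; [auto|exfalso].
    assert (dl <= d (iota (GV w)) (iota (GE e s))); [|lra].
    apply (glb_lb _ _ _ (Hgd (GV w) (GE e s) I Hs)). intros r Hr.
    apply (pl_lb_GV G Hlen w dl (GE e s) r); auto.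
    simpl. intros w' b [H|[H|[]]]; inversion H; subst; intro; apply E; red; auto.
  - exists (Rmin s' (len e' - s')); split. simpl in Hp. apply Rmin_glb_lt; lra.
    exists (e' :: nil). intros e s Hs Hu.
    destruct (classic (e' = e)) as [E|E]; [left; auto|exfalso].
    assert (Rmin s' (len e' - s') <= d (iota (GE e' s')) (iota (GE e s))); [|lra].
    apply (glb_lb _ _ _ (Hgd (GE e' s') (GE e s) Hp Hs)). intros r Hr.
    apply (pl_lb_GE G Hlen e' s' (GE e s) r); auto. intros e2 s2 H; inversion H; subst; auto.
Qed.

Lemma iota_GV_inj (G : MGraph) (X : Type) (d : X -> X -> R) (iota : gpt G -> X) :
  wf_graph G -> is_completion d iota ->
  forall v p, valid p -> iota (GV v) = iota p -> p = GV v.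
Proof.
  intros [_ [_ [Hlen [Hlf _]]]] [[Hm _] [Hgd _]] v p Hp Heq.
  assert (H0 : d (iota p) (iota (GV v)) = 0) by (rewrite Heq; apply Hm; auto).
  destruct p as [w | e' s'].
  - destruct (classic (w = v)) as [->|E]; auto. exfalso.
    destruct (Hlf w) as [lw Hlw]. destruct (delta_list G Hlen lw) as [dl [Hdl Hd]].
    assert (dl <= d (iota (GV w)) (iota (GV v))); [|lra].
    apply (glb_lb _ _ _ (Hgd (GV w) (GV v) I I)). intros r Hr.
    apply (pl_lb_GV G Hlen w dl (GV v) r); auto.
    simpl. intros w' b [H|[]]; inversion H; subst; auto.
  - exfalso. simpl in Hp.
    assert (0 < Rmin s' (len e' - s')) by (apply Rmin_glb_lt; lra).
    assert (Rmin s' (len e' - s') <= d (iota (GE e' s')) (iota (GV v))); [|lra].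
    apply (glb_lb _ _ _ (Hgd (GE e' s') (GV v) Hp I)). intros r Hr.
    apply (pl_lb_GE G Hlen e' s' (GV v) r); auto. all: try (intros; discriminate). exact I.
Qed.

Lemma edge_id a b L t1 t2 sl : 0 < L -> sl = (b - a) / L -> t2 < t1 ->
  a <> t1 -> a <> t2 -> b <> t1 -> b <> t2 ->
  (if decP (t2 < a < t1) then sl else 0) + (if decP (t2 < b < t1) then - sl else 0) =
  (if decP (a < t1 < b \/ b < t1 < a) then Rabs sl else 0) -
  (if decP (a < t2 < b \/ b < t2 < a) then Rabs sl else 0).
Proof.
  intros HL Hsl Ht H1 H2 H3 H4.
  assert (Hs1 : a < b -> 0 < sl) by (intro; subst; apply Rdiv_lt_0_compat; lra).
  assert (Hs2 : b < a -> sl < 0) by (intro; subst; assert (0 < (a-b)/L) by (apply Rdiv_lt_0_compat; lra);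
    replace ((b-a)/L) with (-((a-b)/L)) by (field; lra); lra).
  assert (Hs3 : a = b -> sl = 0) by (intro; subst; unfold Rdiv; rewrite Rminus_diag, Rmult_0_l; auto).
  destruct (Rtotal_order a b) as [Hab|[Hab|Hab]];
  [ rewrite (Rabs_pos_eq sl) by (specialize (Hs1 Hab); lra)
  | specialize (Hs3 Hab)
  | rewrite (Rabs_left sl) by auto];
  destruct (Rtotal_order a t2) as [?|[?|?]]; try congruence;
  destruct (Rtotal_order a t1) as [?|[?|?]]; try congruence;
  destruct (Rtotal_order b t2) as [?|[?|?]]; try congruence;
  destruct (Rtotal_order b t1) as [?|[?|?]]; try congruence;
  repeat match goal with
  | |- context [decP ?P] =>
      first [ rewrite (decP_T P) by (first [split; lra | left; split; lra | right; split; lra])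
            | rewrite (decP_F P) by (intros [? ?] || intros [[? ?]|[? ?]]; lra) ]
  end; try lra.
Qed.

Lemma cross_real a b L t : 0 < L -> a <> t -> b <> t ->
  ((exists s, 0 < s < L /\ a + (b - a) / L * s = t) <-> (a < t < b \/ b < t < a)).
Proof.
  intros HL Ha Hb. split.
  - intros [s [Hs Heq]]. set (lam := s / L) in *.
    assert (Hl : 0 < lam < 1).
    { unfold lam; split. apply Rdiv_lt_0_compat; lra.
      apply (Rmult_lt_reg_r L); auto. unfold Rdiv; rewrite Rmult_assoc, Rinv_l; lra. }
    assert (Ht : t = a + (b - a) * lam) by (rewrite <- Heq; unfold lam; field; lra).
    destruct (Rtotal_order a b) as [?|[?|?]].
    + left; split; nra.
    + subst; exfalso; apply Ha; lra.
    + right; split; nra.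
  - intros H. exists ((t - a) * L / (b - a)).
    assert (b - a <> 0) by (destruct H; lra).
    split; [|field; split; lra].
    destruct H as [[? ?]|[? ?]].
    + split. apply Rdiv_lt_0_compat; [nra|lra].
      apply (Rmult_lt_reg_r (b - a)); [lra|]. unfold Rdiv; rewrite Rmult_assoc, Rinv_l; nra.
    + replace ((t - a) * L / (b - a)) with ((a - t) * L / (a - b)) by (field; split; lra).
      split. apply Rdiv_lt_0_compat; [nra|lra].
      apply (Rmult_lt_reg_r (a - b)); [lra|]. unfold Rdiv; rewrite Rmult_assoc, Rinv_l; nra.
Qed.

Lemma nu_deriv_val (G : MGraph) (X : Type) (iota : gpt G -> X) (f : X -> R) t e s :
  linear_on_edges iota f -> 0 < s < len e -> f (iota (GE e s)) = t ->
  slope iota f e <> 0 -> nu_deriv iota f t (GE e s) = Rabs (slope iota f e).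
Proof.
  intros Hlin Hs Ht Hsl. simpl.
  set (sl := slope iota f e) in *.
  assert (Hf : forall h, 0 < h < len e - s -> f (iota (GE e (s + h))) = t + sl * h).
  { intros h Hh. rewrite Hlin by lra. rewrite Hlin in Ht by lra. unfold sl. rewrite <- Ht. ring. }
  destruct (Rtotal_order sl 0) as [Hn|[Hz|Hp]]; [|contradiction|].
  - rewrite decP_F. rewrite Rabs_left; auto.
    intros [h [Hh H]]. set (h' := Rmin h (len e - s) / 2).
    assert (0 < Rmin h (len e - s)) by (apply Rmin_glb_lt; lra).
    assert (Rmin h (len e - s) <= h) by apply Rmin_l.
    assert (Rmin h (len e - s) <= len e - s) by apply Rmin_r.
    specialize (H h'). rewrite Hf in H by (unfold h'; lra).
    assert (0 < h') by (unfold h'; lra).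
    assert (h' < h) by (unfold h'; lra). specialize (H (conj H3 H4)). nra.
  - rewrite decP_T. rewrite Rabs_right; lra.
    exists (len e - s); split; [lra|]. intros h' Hh'. rewrite Hf by lra. nra.
Qed.

Lemma small_lam c m : 0 < m -> exists lam, 0 < lam < 1 /\ Rabs (c * lam) < m.
Proof.
  intros Hm. set (k := Rabs c).
  assert (Hk : 0 <= k) by apply Rabs_pos.
  set (lam := Rmin (1/2) (m / (2 * (k + 1)))).
  assert (H1 : lam <= 1/2) by apply Rmin_l.
  assert (H2 : lam <= m / (2 * (k + 1))) by apply Rmin_r.
  assert (H3 : 0 < lam) by (apply Rmin_glb_lt; [lra| apply Rdiv_lt_0_compat; lra]).
  exists lam; split; [lra|].
  rewrite Rabs_mult, (Rabs_pos_eq lam) by lra. fold k.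
  assert (lam * (2 * (k + 1)) <= m).
  { apply (Rmult_le_compat_r (2 * (k+1))) in H2; [|lra].
    unfold Rdiv in H2. rewrite Rmult_assoc, Rinv_l in H2; lra. }
  nra.
Qed.

Theorem lemma3p12 (G : MGraph) (X : Type) (d : X -> X -> R)
  (iota : gpt G -> X) (f : X -> R) (E : X -> Prop) (C eps t1 t2 : R) :
  wf_graph G ->
  is_completion d iota ->
  compact_space d ->
  totally_disconnected d (in_bd iota) ->
  clopen_in d (in_bd iota) E ->
  clopen_in d (in_bd iota) (fun x => in_bd iota x /\ ~ E x) ->
  (exists x, E x) ->
  (exists x, in_bd iota x /\ ~ E x) ->
  harmonic d iota f ->
  0 <= C ->
  (forall x, E x -> f x = C) ->
  (forall x, in_bd iota x -> ~ E x -> C < f x) ->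
  0 < eps ->
  regular_value iota f t1 ->
  regular_value iota f t2 ->
  C < t2 -> t2 < t1 ->
  (forall x, in_bd iota x -> ~ E x -> t1 < f x) ->
  (forall x, f x <= t1 -> exists y, E y /\ d x y < eps) ->
  (forall x, f x <= t2 -> exists y, E y /\ d x y < eps) ->
  (* G_2 = f^{-1}([t2,t1]) ∩ G is a finite graph ... *)
  (exists lv : list (V G), forall v, t2 <= f (iota (GV v)) <= t1 -> In v lv) /\
  (exists le : list (Ed G), forall e,
      (exists s, 0 < s < len e /\ t2 <= f (iota (GE e s)) <= t1) -> In e le) /\
  (exists L1, enumerates_level iota f t1 L1) /\
  (exists L2, enumerates_level iota f t2 L2) /\
  (* ... containing no boundary vertex of G ... *)
  (forall v : V G, bdry v -> ~ (t2 <= f (iota (GV v)) <= t1)) /\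
  (* ... and the flux identity *)
  (forall L1 L2, enumerates_level iota f t1 L1 -> enumerates_level iota f t2 L2 ->
     sumR (nu_deriv iota f t1) L1 = sumR (nu_deriv iota f t2) L2).
Proof.
  intros Hwf Hcomp Hcpt Htd HEc HEcc HEne HEcne Hharm HC HEf HEcf Heps Hr1 Hr2 HCt2 Ht21 HEc1 Hd1 Hd2.
  destruct Hharm as [Hcont [Hlin Hkir]].
  assert (Hmet : is_metric d) by apply Hcomp.
  assert (Hlen : forall e : Ed G, 0 < len e) by apply Hwf.
  assert (Hbdr : forall x, in_bd iota x -> ~ (t2 <= f x <= t1)).
  { intros x Hx Hr. destruct (classic (E x)) as [HE|HE].
    - rewrite (HEf x HE) in Hr. lra.
    - specialize (HEc1 x Hx HE). lra. }
  assert (Hvp : forall x, t2 <= f x <= t1 -> exists p, valid p /\ x = iota p).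
  { intros x Hx. apply NNPP; intro Hn. apply (Hbdr x); auto.
    intros [p [Hp [_ Heq]]]. apply Hn; eauto. }
  assert (Hlv : exists lv : list (V G), forall v, t2 <= f (iota (GV v)) <= t1 -> In v lv).
  { apply (finite_by_compact d f (fun v => iota (GV v)) (fun v => v)
      (fun v => t2 <= f (iota (GV v)) <= t1) t2 t1 Hmet Hcpt Hcont); auto.
    intros x Hx. destruct (Hvp x Hx) as [p [Hp ->]].
    destruct (loc_vertex G X d iota Hwf Hcomp p Hp) as [r [Hr [L HL]]].
    exists r; split; auto. exists L; intros a _ Ha; auto. }
  assert (Hle : exists le : list (Ed G), forall e,
      (exists s, 0 < s < len e /\ t2 <= f (iota (GE e s)) <= t1) -> In e le).
  { destruct (finite_by_compact d f (fun a : Ed G * R => iota (GE (fst a) (snd a))) fst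
      (fun a => 0 < snd a < len (fst a) /\ t2 <= f (iota (GE (fst a) (snd a))) <= t1)
      t2 t1 Hmet Hcpt Hcont) as [l Hl].
    - intros a [_ H]; auto.
    - intros x Hx. destruct (Hvp x Hx) as [p [Hp ->]].
      destruct (loc_edge G X d iota Hwf Hcomp p Hp) as [r [Hr [L HL]]].
      exists r; split; auto. exists L; intros [e s] [Hs _] Ha; exact (HL e s Hs Ha).
    - exists l. intros e [s Hs]. apply (Hl (e, s)); auto. }
  assert (Hbv : forall v : V G, bdry v -> ~ (t2 <= f (iota (GV v)) <= t1)).
  { intros v Hb. apply Hbdr. intros [p [Hp [Hi Heq]]].
    pose proof (iota_GV_inj G X d iota Hwf Hcomp v p Hp Heq). subst p. simpl in Hi. auto. }
  destruct Hle as [le0 Hle0].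
  assert (Hrv : forall t, regular_value iota f t -> forall v, f (iota (GV v)) <> t).
  { intros t [_ Hr] v. apply (Hr (GV v) I I). }
  assert (Hlev : forall t, regular_value iota f t -> forall e s, 0 < s < len e ->
      f (iota (GE e s)) = t ->
      slope iota f e <> 0 /\ s = (t - f (iota (GV (src e)))) / slope iota f e).
  { intros t [_ Hr] e s Hs Ht.
    assert (slope iota f e <> 0) by (intro Hz; apply (Hr (GE e s) Hs Hz Ht)).
    split; auto. rewrite Hlin in Ht by auto. rewrite <- Ht. field; auto. }
  set (st := fun t e => (t - f (iota (GV (src e)))) / slope iota f e).
  assert (Hexact : forall t, t2 <= t <= t1 -> regular_value iota f t ->
      exists L, enumerates_level iota f t L).
  { intros t Ht Hr.
    destruct (exact_list (map (fun e => GE e (st t e)) le0)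
       (fun p => valid p /\ f (iota p) = t)) as [L [HN HL]].
    - intros [v|e s] [Hp Hf]. exfalso; apply (Hrv t Hr v Hf).
      apply in_map_iff. exists e. destruct (Hlev t Hr e s Hp Hf) as [_ Hs].
      split. unfold st; rewrite Hs; auto.
      apply Hle0. exists s. split; auto. rewrite Hf; auto.
     
    - exists L; split; auto. }
  split; [exact Hlv|]. split; [exists le0; exact Hle0|].
  split; [apply Hexact; auto; lra|]. split; [apply Hexact; auto; lra|].
  split; [exact Hbv|].
  intros L1 L2 HL1 HL2.
  set (Pe := fun e => exists s, 0 < s < len e /\ t2 <= f (iota (GE e s)) <= t1).
  destruct (exact_list le0 Pe Hle0) as [Le [HLeN HLe]].
  set (cross := fun t e => exists s, 0 < s < len e /\ f (iota (GE e s)) = t).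
  set (c := fun t e => if decP (cross t e) then Rabs (slope iota f e) else 0).
  assert (Hflux : forall t L, t2 <= t <= t1 -> regular_value iota f t ->
     enumerates_level iota f t L -> sumR (nu_deriv iota f t) L = sumR (c t) Le).
  { intros t L Ht Hr [HN HL].
    set (M := map (fun e => GE e (st t e)) (filter (fun e => decP (cross t e)) Le)).
    assert (HLM : Permutation L M).
    { apply NoDup_Permutation; auto.
      - apply Injective_map_NoDup. intros x y H; inversion H; auto. apply NoDup_filter; auto.
      - intro p. rewrite HL. unfold M. rewrite in_map_iff. split.
        + intros [Hp Hf]. destruct p as [v|e s]. exfalso; apply (Hrv t Hr v Hf).
          destruct (Hlev t Hr e s Hp Hf) as [_ Hs]. exists e. split. unfold st; rewrite Hs; auto.
          apply filter_In. split. apply HLe. exists s; split; auto; rewrite Hf; auto.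
          apply decP_T. exists s; auto.
        + intros [e [<- He]]. apply filter_In in He. destruct He as [_ He].
          destruct (classic (cross t e)) as [[s [Hs Hf]]|Hn];
            [| rewrite decP_F in He; auto; discriminate].
          destruct (Hlev t Hr e s Hs Hf) as [_ Hse].
          unfold st; rewrite <- Hse. split; auto. }
    rewrite (sumR_perm _ _ _ HLM). unfold M. rewrite sumR_map, sumR_filter.
    apply sumR_ext. intros e _. unfold c.
    destruct (classic (cross t e)) as [[s [Hs Hf]]|Hn].
    - rewrite !decP_T by (exists s; auto). destruct (Hlev t Hr e s Hs Hf) as [Hsl Hse].
      unfold st; rewrite <- Hse. apply nu_deriv_val; auto.
    - rewrite !decP_F by auto. reflexivity. }
  rewrite (Hflux t1 L1), (Hflux t2 L2); auto; try lra.
  set (Wp := fun v => t2 < f (iota (GV v)) < t1).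
  destruct Hlv as [lv Hlv'].
  destruct (exact_list lv Wp) as [Wl [HWN HWl]].
  { intros v Hv; apply Hlv'; unfold Wp in Hv; lra. }
  assert (Hsum0 : sumR (fun v => sumR (out_deriv iota f v) Le) Wl = 0).
  { apply sumR_zero. intros v Hv. apply HWl in Hv. unfold Wp in Hv.
    destruct (proj1 (proj2 (proj2 (proj2 Hwf))) v) as [lw Hlw].
    destruct (exact_list lw (fun e => incident e v) Hlw) as [Iv [HIN HIv]].
    rewrite <- (sumR_subset _ Iv Le); auto.
    - apply Hkir; auto. intro Hb. apply (Hbv v Hb). lra.
    - intros e He. apply HIv in He. apply HLe. unfold Pe.
      set (a := f (iota (GV (src e)))). set (b := f (iota (GV (tgt e)))).
      assert (Hm : 0 < Rmin (f (iota (GV v)) - t2) (t1 - f (iota (GV v))))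
        by (apply Rmin_glb_lt; lra).
      pose proof (Rmin_l (f (iota (GV v)) - t2) (t1 - f (iota (GV v)))).
      pose proof (Rmin_r (f (iota (GV v)) - t2) (t1 - f (iota (GV v)))).
      destruct (small_lam (b - a) _ Hm) as [lam [Hlam Habs]].
      apply Rabs_def2 in Habs. pose proof (Hlen e).
      destruct He as [Hs|Ht].
      + exists (len e * lam). split. split; nra.
        rewrite Hlin by (split; nra). unfold slope. fold a b.
        replace (a + (b - a) / len e * (len e * lam)) with (a + (b - a) * lam) by (field; lra).
        assert (Ha : a = f (iota (GV v))) by (unfold a; rewrite Hs; auto). split; lra.
      + exists (len e - len e * lam). split. split; nra.
        rewrite Hlin by (split; nra). unfold slope. fold a b.
        replace (a + (b - a) / len e * (len e - len e * lam)) with (b - (b - a) * lam) by (field; lra).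
        assert (Hb : b = f (iota (GV v))) by (unfold b; rewrite Ht; auto). split; lra.
    - intros e _ Hn. unfold out_deriv. rewrite !decP_F; [lra| |]; intro; apply Hn, HIv; red; auto. }
  rewrite sumR_swap in Hsum0.
  assert (Hcr : forall t e, regular_value iota f t ->
     (cross t e <-> (f (iota (GV (src e))) < t < f (iota (GV (tgt e))) \/
                     f (iota (GV (tgt e))) < t < f (iota (GV (src e)))))).
  { intros t e Hr. rewrite <- (cross_real _ _ (len e)); [| apply Hlen | apply (Hrv t Hr) | apply (Hrv t Hr)].
    unfold cross. split; intros [s [Hs Hf]]; exists s; split; auto.
    - rewrite <- Hf, Hlin by auto. reflexivity.
    - rewrite Hlin by auto. exact Hf. }
  assert (Hedge : forall e, sumR (fun v => out_deriv iota f v e) Wl = c t1 e - c t2 e).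
  { intro e. unfold out_deriv. rewrite sumR_plus.
    rewrite (sumR_ind (src e) (slope iota f e) Wl HWN).
    rewrite (sumR_ind (tgt e) (- slope iota f e) Wl HWN).
    rewrite (decP_iff (In (src e) Wl) (Wp (src e))) by apply HWl.
    rewrite (decP_iff (In (tgt e) Wl) (Wp (tgt e))) by apply HWl.
    unfold c. rewrite (decP_iff _ _ (Hcr t1 e Hr1)), (decP_iff _ _ (Hcr t2 e Hr2)).
    unfold Wp. apply (edge_id _ _ (len e)); auto; apply Hrv; auto. }
  rewrite (sumR_ext _ (fun e => c t1 e + - c t2 e)) in Hsum0 by (intros; rewrite Hedge; ring).
  rewrite sumR_plus, sumR_opp in Hsum0. lra.
Qed.
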